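(* Let $n\ge2$, $\mu=(n-1)/n$, and let $M_{b|k}$ ($k\in[n]$, $b\in\{0,1\}$) be the projectors defined in the context. Then the observable $O_k:=M_{0|k}-M_{1|k}$ on $n-1$ qubits equals $$O_k=\sqrt{\frac{n-1}{n}}\,\mathcal E_k+\frac{1}{\sqrt{n(n-1)}}\,\mathcal K_k,$$ where for $k\in\{1,\dots,n-1\}$: $\mathcal E_k=Z_k$ and $$\mathcal K_k=\sum_{l=k+1}^{n-1}X_kZ_{k+1}\cdots Z_{l-1}X_l+X_kZ_{k+1}\cdots Z_{n-1}+\sum_{l=1}^{k-1}Y_lZ_{l+1}\cdots Z_{k-1}Y_k,$$ and for $k=n$: $\mathcal E_n=\prod_{j=1}^{n-1}Z_j$ and $\mathcal K_n=-\sum_{l=1}^{n-1}Z_1Z_2\cdots Z_{l-1}X_l$.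
   Context: Let $E_n$, $O_n$ be the even- and odd-weight strings in $\{0,1\}^n$. For $x\in E_n$, $\ket{\psi_x}=\ket{x_1\cdots x_{n-1}}$ (computational basis of $n-1$ qubits). For $y\in O_n$, $\ket{\psi_y}=\frac1{\sqrt n}\sum_{x\in E_n,\,d_H(x,y)=1}(A_n)_{yx}\ket{\psi_x}$, where $(A_n)_{yx}=\bra{y}A_n\ket{x}$ in the $n$-qubit computational basis (qubit 1 leftmost) and $A_n=\sum_{l=1}^nZ^{\otimes(l-1)}\otimes X\otimes I^{\otimes(n-l)}$. For $k\in[n]$, $b\in\{0,1\}$, $S_{k,b}=\sum_{x\in E_n,x_k=b}\ket{\psi_x}\bra{\psi_x}+\sum_{y\in O_n,y_k=b}\ket{\psi_y}\bra{\psi_y}$ and $M_{b|k}$ is the orthogonal projector onto the eigenspace of $S_{k,b}$ for eigenvalue $1+\sqrt{\mu}$. $X_j,Y_j,Z_j$ denote Pauli operators on qubit $j$ of the $n-1$ qubits; empty products of $Z$'s are the identity. *)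

(* Defs.v *)
(* Conventions.  Qubits and bit positions are
   indexed 1-based by natural numbers, exactly as in the paper. *)
From HB Require Import structures.
From mathcomp Require Import all_boot all_order all_algebra.
From mathcomp Require Import algC.
Set Implicit Arguments. Unset Strict Implicit. Unset Printing Implicit Defensive.
Import Order.TTheory GRing.Theory Num.Theory.
Local Open Scope ring_scope.

Definition bits (m : nat) := {ffun 'I_m -> bool}.
Definition dim (m : nat) : nat := #|{: bits m}|.
(* operators and (column) vectors on m qubits, basis indexed by enum_rank *)
Definition Opr (m : nat) := 'M[algC]_(dim m).
Definition Vec (m : nat) := 'cV[algC]_(dim m).

Definition bit m (x : bits m) (j : nat) : bool :=
  [exists i : 'I_m, (i.+1 == j) && x i].
Definition flip m (x : bits m) (j : nat) : bits m :=
  [ffun i : 'I_m => if i.+1 == j then ~~ x i else x i].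

Definition ket m (x : bits m) : Vec m := delta_mx (enum_rank x) 0.
Definition op_of m (f : bits m -> bits m -> algC) : Opr m :=
  \matrix_(i, j) f (enum_val i) (enum_val j).
Definition mel m (A : Opr m) (y x : bits m) : algC := A (enum_rank y) (enum_rank x).
Definition adj m (A : 'M[algC]_(dim m, 1)) : 'M[algC]_(1, dim m) :=
  (map_mx (fun z => z^*) A)^T.
Definition adjO m (A : Opr m) : Opr m := (map_mx (fun z => z^*) A)^T.

Definition PX m (j : nat) : Opr m := op_of (fun y x => (y == flip x j)%:R).
Definition PZ m (j : nat) : Opr m :=
  op_of (fun y x => (y == x)%:R * (-1) ^+ bit x j).
Definition PY m (j : nat) : Opr m :=
  op_of (fun y x => (y == flip x j)%:R * (if bit x j then - 'i else 'i)).

(* Zs m a b = Z_a Z_(a+1) ... Z_(b-1)  (identity if b <= a) *)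
Definition Zs m (a b : nat) : Opr m :=
  foldr (fun j A => PZ m j *m A) 1%:M (iota a (b - a)).

Definition weight m (x : bits m) : nat := #|[set i | x i]|.
Definition evenw m (x : bits m) : bool := ~~ odd (weight x).
Definition dH m (x y : bits m) : nat := #|[set i | x i != y i]|.

Definition An (n : nat) : Opr n := \sum_(1 <= l < n.+1) (Zs n 1 l *m PX n l).

Definition trunc n (x : bits n) : bits n.-1 := [ffun i : 'I_n.-1 => bit x i.+1].

Definition psi n (x : bits n) : Vec n.-1 :=
  if evenw x then ket (trunc x)
  else (sqrtC n%:R)^-1 *:
       \sum_(x' : bits n | evenw x' && (dH x x' == 1%N))
          (mel (An n) x x' *: ket (trunc x')).

Definition Sop n (k : nat) (b : bool) : Opr n.-1 :=
  \sum_(x : bits n | bit x k == b) (psi x *m adj (psi x)).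

Definition mu (n : nat) : algC := (n.-1)%:R / n%:R.

Definition is_orth_proj_eig m (S : Opr m) (lam : algC) (P : Opr m) : Prop :=
  [/\ adjO P = P, P *m P = P &
      forall v : Vec m, P *m v = v <-> S *m v = lam *: v].

Definition Ecal n (k : nat) : Opr n.-1 :=
  if (k < n)%N then PZ n.-1 k else Zs n.-1 1 n.

Definition Kcal n (k : nat) : Opr n.-1 :=
  if (k < n)%N then
    \sum_(k.+1 <= l < n) (PX n.-1 k *m Zs n.-1 k.+1 l *m PX n.-1 l)
    + PX n.-1 k *m Zs n.-1 k.+1 n
    + \sum_(1 <= l < k) (PY n.-1 l *m Zs n.-1 l.+1 k *m PY n.-1 k)
  else - \sum_(1 <= l < n) (Zs n.-1 1 l *m PX n.-1 l).

(* Main.v *)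
Require Import Defs.
From HB Require Import structures.
From mathcomp Require Import all_boot all_order all_algebra.
From mathcomp Require Import algC.
From mathcomp Require Import ring lra zify.
Import Order.TTheory GRing.Theory Num.Theory.
Local Open Scope ring_scope.
Set Implicit Arguments. Unset Strict Implicit. Unset Printing Implicit Defensive.


Section Mel.
Variable m : nat.
Implicit Types A B : Opr m.

Lemma mel_eq A B : (forall y x, mel A y x = mel B y x) -> A = B.
Proof.
move=> H; apply/matrixP => i j; have := H (enum_val i) (enum_val j).
by rewrite /mel !enum_valK.
Qed.

Lemma mel_op (f : bits m -> bits m -> algC) y x : mel (op_of f) y x = f y x.
Proof. by rewrite /mel /op_of mxE !enum_rankK. Qed.

Lemma sum_rank (F : 'I_(Defs.dim m) -> algC) :
  \sum_i F i = \sum_(w : bits m) F (enum_rank w).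
Proof.
by rewrite (reindex (@enum_rank (bits m))) //; apply: onW_bij; apply: enum_rank_bij.
Qed.

Lemma mel_mul A B y x : mel (A *m B) y x = \sum_w mel A y w * mel B w x.
Proof. by rewrite /mel mxE sum_rank. Qed.

Lemma mel_add A B y x : mel (A + B) y x = mel A y x + mel B y x.
Proof. by rewrite /mel mxE. Qed.
Lemma mel_opp A y x : mel (- A) y x = - mel A y x.
Proof. by rewrite /mel mxE. Qed.
Lemma mel_sub A B y x : mel (A - B) y x = mel A y x - mel B y x.
Proof. by rewrite mel_add mel_opp. Qed.
Lemma mel_scale c A y x : mel (c *: A) y x = c * mel A y x.
Proof. by rewrite /mel mxE. Qed.
Lemma mel_sum (I : Type) (r : seq I) (P : pred I) (F : I -> Opr m) y x :
  mel (\sum_(i <- r | P i) F i) y x = \sum_(i <- r | P i) mel (F i) y x.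
Proof. by rewrite /mel summxE. Qed.
Lemma mel1 y x : mel (1%:M : Opr m) y x = (y == x)%:R.
Proof. by rewrite /mel mxE (inj_eq enum_rank_inj). Qed.
Lemma mel0 y x : mel (0 : Opr m) y x = 0.
Proof. by rewrite /mel mxE. Qed.

End Mel.

Section Bits.
Variable m : nat.
Definition bxor (a b : bits m) : bits m := [ffun i => a i (+) b i].
Definition dot (a b : bits m) : bool := \big[addb/false]_i (a i && b i).
Definition mk (P : nat -> bool) : bits m := [ffun i : 'I_m => P i.+1].
Definition zb : bits m := [ffun _ => false].

Lemma bxorC a b : bxor a b = bxor b a.
Proof. by apply/ffunP => i; rewrite !ffunE addbC. Qed.
Lemma bxorA a b c : bxor a (bxor b c) = bxor (bxor a b) c.
Proof. by apply/ffunP => i; rewrite !ffunE addbA. Qed.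
Lemma bxorK a b : bxor (bxor a b) b = a.
Proof. by apply/ffunP => i; rewrite !ffunE addbK. Qed.
Lemma bxor0 a : bxor a zb = a.
Proof. by apply/ffunP => i; rewrite !ffunE addbF. Qed.
Lemma bxorvv a : bxor a a = zb.
Proof. by apply/ffunP => i; rewrite !ffunE addbb. Qed.
Lemma mk_xor P Q : bxor (mk P) (mk Q) = mk (fun j => P j (+) Q j).
Proof. by apply/ffunP => i; rewrite !ffunE. Qed.
Lemma mk_ext P Q : (forall j, (1 <= j <= m)%N -> P j = Q j) -> mk P = mk Q.
Proof. by move=> H; apply/ffunP => i; rewrite !ffunE H // ltn_ord. Qed.
Lemma mk0 P : (forall j, (1 <= j <= m)%N -> P j = false) -> mk P = zb.
Proof. by move=> H; apply/ffunP => i; rewrite !ffunE H // ltn_ord. Qed.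

Lemma dotC a b : dot a b = dot b a.
Proof. by apply: eq_bigr => i _; rewrite andbC. Qed.
Lemma dot_xorr a x y : dot a (bxor x y) = dot a x (+) dot a y.
Proof.
rewrite /dot -big_split /=; apply: eq_bigr => i _; rewrite ffunE.
by case: (a i).
Qed.
Lemma dot_xorl a b x : dot (bxor a b) x = dot a x (+) dot b x.
Proof. by rewrite dotC dot_xorr !(dotC x). Qed.
Lemma dot0r a : dot a zb = false.
Proof. by rewrite /dot big1 // => i _; rewrite ffunE andbF. Qed.
Lemma dot0l a : dot zb a = false.
Proof. by rewrite dotC dot0r. Qed.

Lemma dot_mk_e P l :
  dot (mk P) (mk (pred1 l)) = [&& (1 <= l)%N, (l <= m)%N & P l].
Proof.
case: (boolP [&& (1 <= l)%N & (l <= m)%N]) => [/andP[l1 lm]|Hl].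
  have Hlt : (l.-1 < m)%N by rewrite prednK.
  rewrite /dot (bigD1 (Ordinal Hlt)) //= big1 => [|i ne].
    by rewrite !ffunE /= prednK // eqxx andbT l1 lm addbF.
  rewrite !ffunE /=; apply/negbTE; apply/negP => /andP[_ /eqP e].
  by move: ne; rewrite -(inj_eq val_inj) /= -e eqxx.
rewrite /dot big1 => [|i _]; first by move: Hl; case: (1 <= l)%N; case: (l <= m)%N.
rewrite !ffunE /=; apply/negbTE; apply/negP => /andP[_ /eqP e].
by move: Hl; rewrite -e ltn_ord.
Qed.

End Bits.
Arguments zb {m}.

Definition ee m (l : nat) : bits m := mk m (pred1 l).
Definition II m (a b : nat) : bits m := mk m (fun j => (a <= j)%N && (j < b)%N).

Definition pstr m (a b : bits m) (c : algC) : Opr m :=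
  op_of (fun y x => (y == bxor x a)%:R * c * (-1) ^+ dot b x).

Lemma mel_pstr m a b c (y x : bits m) :
  mel (pstr a b c) y x = (y == bxor x a)%:R * c * (-1) ^+ dot b x.
Proof. by rewrite mel_op. Qed.

Lemma pstr_mul m (a1 b1 a2 b2 : bits m) c1 c2 :
  pstr a1 b1 c1 *m pstr a2 b2 c2 =
  pstr (bxor a1 a2) (bxor b1 b2) (c1 * c2 * (-1) ^+ dot b1 a2).
Proof.
apply: mel_eq => y x; rewrite mel_mul mel_pstr.
rewrite (bigD1 (bxor x a2)) //= big1 => [|w ne]; last first.
  by rewrite !mel_pstr (negbTE ne) !mul0r mulr0.
rewrite !mel_pstr eqxx addr0 mul1r -bxorA (bxorC a2) dot_xorr dot_xorl !signr_addb.
case: (y == _); last by rewrite !mul0r.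
rewrite !mul1r; ring.
Qed.


Ltac bsolve :=
  repeat (match goal with
  | |- context [(?x == ?y :> nat)] => case: (@eqP _ x y) => ?
  | |- context [(?x <= ?y)%N] => case: (leqP x y) => ?
  end); try done; try lia.

Section Ops.
Variable m : nat.

Lemma mk_bit (x : bits m) : mk m (bit x) = x.
Proof.
apply/ffunP => i; rewrite ffunE; apply/existsP/idP => [[j /andP[/eqP e xj]]|xi].
  by have -> : i = j by apply: val_inj; case: e.
by exists i; rewrite eqxx.
Qed.

Lemma bit_dot (x : bits m) j : bit x j = dot (ee m j) x.
Proof.
rewrite dotC /ee; have := @dot_mk_e m (bit x) j; rewrite mk_bit => ->.
case: (boolP (bit x j)) => [h|_]; last by rewrite !andbF.
case/existsP: h => i /andP[/eqP <- _]; by rewrite ltn_ord.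
Qed.

Lemma flip_xor (x : bits m) j : flip x j = bxor x (ee m j).
Proof. by apply/ffunP => i; rewrite /ee /mk !ffunE /=; case: (_ == _); rewrite ?addbT ?addbF. Qed.

Lemma PX_p j : PX m j = pstr (ee m j) zb 1.
Proof. by apply: mel_eq => y x; rewrite !mel_op flip_xor dot0l mulr1 expr0 mulr1. Qed.

Lemma PZ_p j : PZ m j = pstr zb (ee m j) 1.
Proof. by apply: mel_eq => y x; rewrite !mel_op bxor0 bit_dot mulr1. Qed.

Lemma PY_p j : PY m j = pstr (ee m j) (ee m j) 'i.
Proof.
apply: mel_eq => y x; rewrite !mel_op flip_xor bit_dot.
by case: (dot _ _) => /=; rewrite ?expr1 ?expr0; ring.
Qed.

Lemma one_p : (1%:M : Opr m) = pstr zb zb 1.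
Proof. by apply: mel_eq => y x; rewrite mel1 mel_op bxor0 dot0l mulr1 mulr1. Qed.

Lemma scale_p a b c d : c *: pstr a b d = pstr a b (c * d) :> Opr m.
Proof. by apply: mel_eq => y x; rewrite mel_scale !mel_op; ring. Qed.

Lemma add_p a b c d : pstr a b c + pstr a b d = pstr a b (c + d) :> Opr m.
Proof. by apply: mel_eq => y x; rewrite mel_add !mel_op; ring. Qed.

Lemma opp_p a b c : - pstr a b c = pstr a b (- c) :> Opr m.
Proof. by apply: mel_eq => y x; rewrite mel_opp !mel_op; ring. Qed.

Lemma Zs_p a b : Zs m a b = pstr zb (II m a b) 1.
Proof.
rewrite /Zs.
suff H : forall d a, foldr (fun j A => PZ m j *m A) 1%:M (iota a d) = pstr zb (II m a (a + d)) 1.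
  rewrite H; case: (leqP a b) => h; first by rewrite subnKC.
  rewrite (_ : II m a (a + (b - a)) = II m a b) //; apply: mk_ext => j _.
  by bsolve.
elim=> [|d IH] a0 /=.
  by rewrite one_p (_ : II m a0 (a0 + 0) = zb) //; apply: mk0 => j _; bsolve.
rewrite IH PZ_p pstr_mul bxor0 dot0r expr0 !mulr1 /II /ee mk_xor.
congr pstr; apply: mk_ext => j _ /=; bsolve.
Qed.

End Ops.


Lemma sum_nat_delta (V : zmodType) a b k (F : nat -> V) : (a <= k < b)%N ->
  \sum_(a <= l < b) (if l == k then F l else 0) = F k.
Proof.
case/andP=> ak kb.
rewrite (big_cat_nat (n:=k)) //=; last exact: ltnW.
rewrite [X in _ + X](big_cat_nat (n:=k.+1)) //= big_nat1 eqxx.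
rewrite !big1_seq ?add0r ?addr0 // => l /andP[_]; rewrite mem_index_iota => /andP[h1 h2].
  by rewrite gtn_eqF.
by rewrite ltn_eqF.
Qed.

Section Ext.
Variable N : nat.

Definition ext (z : bits N) (c : bool) : bits N.+1 :=
  [ffun i : 'I_N.+1 => if unlift ord_max i is Some j then z j else c].
Definition untr (x : bits N.+1) : bits N := [ffun j => x (lift ord_max j)].

Lemma ext_lift z c j : ext z c (lift ord_max j) = z j.
Proof. by rewrite ffunE liftK. Qed.
Lemma ext_max z c : ext z c ord_max = c.
Proof. by rewrite ffunE unlift_none. Qed.
Lemma widen_lift (i : 'I_N) : widen_ord (leqnSn N) i = lift ord_max i.
Proof. by apply: val_inj; rewrite /= /bump leqNgt ltn_ord. Qed.

Lemma ext_untr x : ext (untr x) (x ord_max) = x.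
Proof.
apply/ffunP => i; case: (unliftP ord_max i) => [j ->|->]; rewrite ?ext_max //.
by rewrite ext_lift ffunE.
Qed.

Lemma ext_eqE z c w d : (ext z c == ext w d) = (z == w) && (c == d).
Proof.
apply/eqP/andP => [e|[/eqP-> /eqP->]] //; split; apply/eqP.
  by apply/ffunP => j; rewrite -(ext_lift z c) -(ext_lift w d) e.
by rewrite -(ext_max z c) e ext_max.
Qed.

Lemma big_ext (V : zmodType) (F : bits N.+1 -> V) :
  \sum_x F x = \sum_(z : bits N) (F (ext z false) + F (ext z true)).
Proof.
rewrite (reindex (fun p : bits N * bool => ext p.1 p.2)) /=; last first.
  exists (fun x => (untr x, x ord_max)) => [[z c] _|x _] /=; last by rewrite ext_untr.
  congr pair; last by rewrite ext_max.
  by apply/ffunP => j; rewrite ffunE ext_lift.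
rewrite -(pair_bigA _ (fun z c => F (ext z c))) /=.
by apply: eq_bigr => z _; rewrite big_bool /= addrC.
Qed.

Lemma mk_extE P : mk N.+1 P = ext (mk N P) (P N.+1).
Proof.
apply/ffunP => i; case: (unliftP ord_max i) => [j ->|->]; rewrite [LHS]ffunE.
  by rewrite ext_lift ffunE /= /bump leqNgt ltn_ord.
by rewrite ext_max.
Qed.

Lemma xor_ext z c w d : bxor (ext z c) (ext w d) = ext (bxor z w) (c (+) d).
Proof.
apply/ffunP => i; case: (unliftP ord_max i) => [j ->|->]; rewrite [LHS]ffunE.
  by rewrite !ext_lift ffunE.
by rewrite !ext_max.
Qed.

Lemma dot_ext a c x d : dot (ext a c) (ext x d) = dot a x (+) (c && d).
Proof.
rewrite /dot big_ord_recr /= !ext_max; congr addb.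
by apply: eq_bigr => i _; rewrite widen_lift !ext_lift.
Qed.

Lemma zb_ext : (zb : bits N.+1) = ext zb false.
Proof. by apply/ffunP => i; case: (unliftP ord_max i) => [j ->|->]; rewrite ?ext_lift ?ext_max !ffunE. Qed.

End Ext.

Definition ones m : bits m := mk m (fun _ => true).
Definition par m (x : bits m) := dot (ones m) x.

Lemma odd_weight m (x : bits m) : odd (weight x) = par x.
Proof.
rewrite /weight /par /dot -sum1_card big_mkcond /=.
rewrite (big_morph odd oddD (erefl (odd 0))).
by apply: eq_bigr => i _; rewrite inE ffunE; case: (x i).
Qed.

Lemma ee_N N : ee N N.+1 = zb.
Proof. apply: mk0 => j /andP[_ h] /=; apply/eqP; lia. Qed.

Lemma bit_ext N (z : bits N) c k :
  bit (ext z c) k = if k == N.+1 then c else bit z k.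
Proof.
rewrite !bit_dot /ee mk_extE -/(ee N k) dot_ext.
case: (eqVneq k N.+1) => [->|ne] /=.
  by rewrite ee_N dot0l eqxx.
by rewrite eq_sym (negbTE ne) addbF.
Qed.

Lemma bit_ord m (x : bits m) (i : 'I_m) : bit x i.+1 = x i.
Proof.
apply/existsP/idP => [[j /andP[/eqP e xj]]|xi].
  by have -> : i = j by apply: val_inj; case: e.
by exists i; rewrite eqxx.
Qed.

Lemma trunc_ext N (z : bits N) c : trunc (n:=N.+1) (ext z c) = z.
Proof.
apply/ffunP => i; rewrite ffunE bit_ext.
have -> : (i.+1 == N.+1) = false by rewrite eqSS ltn_eqF.
by rewrite bit_ord.
Qed.

Lemma par_ext N (z : bits N) c : par (ext z c) = par z (+) c.
Proof. by rewrite /par /ones mk_extE dot_ext andTb. Qed.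

Lemma evenw_ext N (z : bits N) c : evenw (ext z c) = ~~ (par z (+) c).
Proof. by rewrite /evenw odd_weight par_ext. Qed.

Lemma dH_xor m (x e : bits m) : dH (bxor x e) x = weight e.
Proof.
rewrite /dH /weight; apply: eq_card => i; rewrite !inE ffunE.
by case: (x i); case: (e i).
Qed.

Lemma weight_ee m l : (1 <= l <= m)%N -> weight (ee m l) = 1%N.
Proof.
move=> /andP[l1 lm]; have Hlt : (l.-1 < m)%N by rewrite prednK.
rewrite /weight (_ : [set i | ee m l i] = [set Ordinal Hlt]) ?cards1 //.
apply/setP => i; rewrite !inE ffunE /=; apply/eqP/eqP => [e|->] /=.
  by apply: val_inj => /=; rewrite -e.
by rewrite prednK.
Qed.


Definition gam m l : Opr m := pstr (ee m l) (II m 1 l) 1.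
Definition Gop N : Opr N := \sum_(1 <= l < N.+2) gam N l.

Lemma dot_II_ee m a b l :
  dot (II m a b) (ee m l) = [&& (1 <= l)%N, (l <= m)%N & (a <= l < b)%N].
Proof. by rewrite /II /ee dot_mk_e. Qed.

Lemma dot_ee_ee m k l :
  dot (ee m k) (ee m l) = [&& (1 <= l)%N, (l <= m)%N & (k == l)].
Proof. by rewrite /ee dot_mk_e /= eq_sym. Qed.

Lemma An_p n : An n = \sum_(1 <= l < n.+1) gam n l.
Proof.
rewrite /An; apply: eq_bigr => l _.
rewrite Zs_p PX_p pstr_mul bxorC !bxor0 dot_II_ee ltnn !andbF expr0 !mulr1.
by [].
Qed.

Section Vel.
Variable m : nat.
Definition vel (v : Vec m) (y : bits m) := v (enum_rank y) 0.

Lemma vel_eq (u v : Vec m) : (forall y, vel u y = vel v y) -> u = v.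
Proof.
move=> H; apply/matrixP => i j; rewrite (ord1 j).
by have := H (enum_val i); rewrite /vel enum_valK.
Qed.
Lemma vel_ket z y : vel (ket z) y = (y == z)%:R.
Proof. by rewrite /vel /ket mxE (inj_eq enum_rank_inj) eqxx andbT. Qed.
Lemma vel_mul (A : Opr m) v y : vel (A *m v) y = \sum_w mel A y w * vel v w.
Proof. by rewrite /vel mxE sum_rank. Qed.
Lemma vel_scale c v y : vel (c *: v) y = c * vel v y.
Proof. by rewrite /vel mxE. Qed.
Lemma vel_sum (I : Type) (r : seq I) (P : pred I) (F : I -> Vec m) y :
  vel (\sum_(i <- r | P i) F i) y = \sum_(i <- r | P i) vel (F i) y.
Proof. by rewrite /vel summxE. Qed.
Lemma mel_outer (u v : Vec m) y x : mel (u *m adj v) y x = vel u y * (vel v x)^*.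
Proof.
rewrite /mel /vel mxE big_ord1 /adj !mxE; done.
Qed.
Lemma mel_ket_mul (A : Opr m) y z : vel (A *m ket z) y = mel A y z.
Proof.
rewrite vel_mul (bigD1 z) //= big1 => [|w ne]; first by rewrite vel_ket eqxx mulr1 addr0.
by rewrite vel_ket (negbTE ne) mulr0.
Qed.
End Vel.

Lemma mel_gam m l y x :
  mel (gam m l) y x = (y == bxor x (ee m l))%:R * (-1) ^+ dot (II m 1 l) x.
Proof. by rewrite mel_pstr mulr1. Qed.

Lemma mel_G N y x :
  mel (Gop N) y x = \sum_(1 <= l < N.+2) (y == bxor x (ee N l))%:R * (-1) ^+ dot (II N 1 l) x.
Proof. by rewrite mel_sum; apply: eq_bigr => l _; rewrite mel_gam. Qed.

Lemma melG_sym N y x : mel (Gop N) y x = mel (Gop N) x y.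
Proof.
rewrite !mel_G; apply: eq_big_nat => l /andP[l1 l2].
case: (eqVneq y (bxor x (ee N l))) => [->|ne].
  by rewrite bxorK eqxx dot_xorr dot_II_ee ltnn !andbF addbF.
have -> : (x == bxor y (ee N l)) = false.
  by apply/negbTE; apply: contra ne => /eqP ->; rewrite bxorK.
by rewrite !mul0r.
Qed.

Lemma melG_real N y x : (mel (Gop N) y x)^* = mel (Gop N) y x.
Proof.
rewrite mel_G rmorph_sum; apply: eq_bigr => l _.
by rewrite rmorphM rmorphXn rmorph_nat rmorphN1.
Qed.

Section Psi.
Variable N : nat.
Local Notation n := N.+1.

Lemma psi_even z : psi (n:=n) (ext z (par z)) = ket z.
Proof. by rewrite /psi evenw_ext addbb /= trunc_ext. Qed.

Lemma melA_ext z y :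
  (if dH (ext z (~~ par z)) (ext y (par y)) == 1%N
   then mel (An n) (ext z (~~ par z)) (ext y (par y)) else 0)
  = mel (Gop N) y z.
Proof.
set x := ext z _; set x0 := ext y _.
have HA : mel (An n) x x0 = \sum_(1 <= l < n.+1)
     (x == bxor x0 (ee n l))%:R * (-1) ^+ dot (II n 1 l) x0.
  by rewrite An_p mel_sum; apply: eq_bigr => l _; rewrite mel_gam.
have -> : (if dH x x0 == 1%N then mel (An n) x x0 else 0) = mel (An n) x x0.
  case: (eqVneq (dH x x0) 1%N) => // ne; rewrite HA big1_seq // => l.
  rewrite mem_index_iota => /andP[l1 l2] /=.
  case: (eqVneq x (bxor x0 (ee n l))) => [e|]; last by rewrite mul0r.
  by move: ne; rewrite e dH_xor weight_ee ?eqxx // l1 -ltnS.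
rewrite HA mel_G; apply: eq_big_nat => l /andP[l1 l2].
rewrite /x /x0 {1}/ee mk_extE -/(ee N l) xor_ext ext_eqE /II mk_extE -/(II N 1 l).
rewrite dot_ext /= (_ : (N.+1 < l)%N = false) ?andbF ?addbF; last by apply/negbTE; rewrite -leqNgt -ltnS.
case: (eqVneq y (bxor z (ee N l))) => [->|ne].
  rewrite bxorK eqxx /= /par dot_xorr dot_mk_e /= -/(par z).
  rewrite dot_xorr dot_II_ee ltnn !andbF addbF andbT.
  rewrite -addbA (_ : (0 < l <= N)%N (+) (N.+1 == l) = true); last by bsolve.
  by case: (par z).
have -> : (z == bxor y (ee N l)) = false.
  by apply/negbTE; apply: contra ne => /eqP ->; rewrite bxorK.
by rewrite !mul0r.
Qed.

Lemma psi_odd z :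
  psi (n:=n) (ext z (~~ par z)) = (sqrtC n%:R)^-1 *: (Gop N *m ket z).
Proof.
rewrite /psi evenw_ext (_ : par z (+) ~~ par z = true) /=; last by case: (par z).
congr (_ *: _); apply: vel_eq => y.
rewrite vel_sum mel_ket_mul -melA_ext big_mkcond /=.
rewrite (bigD1 (ext y (par y))) //= evenw_ext addbb /= big1 => [|x' ne].
  case: ifP => _; last by rewrite addr0.
  by rewrite vel_scale vel_ket trunc_ext eqxx mulr1 addr0.
case: ifP => // /andP[ev _].
rewrite vel_scale vel_ket.
have -> : (y == trunc x') = false; last by rewrite mulr0.
apply/negbTE; apply: contra ne => /eqP ->.
move: ev; have := ext_untr x'; set w := untr x'; set c := x' ord_max => <-.
rewrite trunc_ext evenw_ext ext_eqE eqxx /=.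
by case: c; case: (par w).
Qed.
End Psi.


Definition Dm N (c : pred (bits N)) : Opr N := \sum_(z | c z) ket z *m adj (ket z).

Lemma sum_deltal m (F : bits m -> algC) z : \sum_w (w == z)%:R * F w = F z.
Proof.
rewrite (bigD1 z) //= big1 => [|w ne]; first by rewrite eqxx mul1r addr0.
by rewrite (negbTE ne) mul0r.
Qed.
Lemma sum_deltar m (F : bits m -> algC) z : \sum_w F w * (w == z)%:R = F z.
Proof. by rewrite -(sum_deltal F z); apply: eq_bigr => w _; rewrite mulrC. Qed.

Lemma sum_delta_c m (F : bits m -> algC) z c :
  \sum_w F w * ((w == z)%:R * c) = F z * c.
Proof.
rewrite -(sum_deltal (fun w => F w * c) z); apply: eq_bigr => w _; ring.
Qed.

Lemma conjM (a b : algC) : (a * b)^* = a^* * b^*.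
Proof. exact: rmorphM. Qed.

Lemma mulmx_sum_both m (A B : Opr m) (I : Type) (r : seq I) (P : pred I) (F : I -> Opr m) :
  A *m (\sum_(z <- r | P z) F z) *m B = \sum_(z <- r | P z) A *m F z *m B.
Proof. by rewrite mulmx_sumr mulmx_suml. Qed.

Lemma sqrt_inv_sq (x : algC) : 0 <= x ->
  (sqrtC x)^-1 * ((sqrtC x)^-1)^* = x^-1.
Proof.
move=> x0; rewrite geC0_conj; last by rewrite invr_ge0 sqrtC_ge0.
by rewrite -invfM -expr2 sqrtCK.
Qed.

Section S.
Variable N : nat.
Local Notation n := N.+1.

Lemma big_ext2 (V : zmodType) (F : bits n -> V) :
  \sum_x F x = \sum_(z : bits N) (F (ext z (par z)) + F (ext z (~~ par z))).
Proof.
rewrite big_ext; apply: eq_bigr => z _; case: (par z) => //=; by rewrite addrC.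
Qed.

Lemma odd_outer z :
  psi (n:=n) (ext z (~~ par z)) *m adj (psi (n:=n) (ext z (~~ par z))) =
  (n%:R)^-1 *: (Gop N *m (ket z *m adj (ket z)) *m Gop N).
Proof.
apply: mel_eq => y w; rewrite psi_odd mel_outer !vel_scale !mel_ket_mul mel_scale.
rewrite mel_mul; under eq_bigr => a _ do rewrite mel_mul.
under eq_bigr => a _ do under eq_bigr => b _ do rewrite mel_outer !vel_ket.
under eq_bigr => a _ do rewrite sum_delta_c.
rewrite (eq_bigr (fun a => (a == z)%:R * (mel (Gop N) y z * mel (Gop N) a w))); last first.
  by move=> a _; rewrite conjC_nat; ring.
rewrite sum_deltal conjM melG_real (melG_sym w z).
rewrite -(sqrt_inv_sq (ler0n _ n)); ring.
Qed.

Lemma Sop_eq k b :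
  Sop n k b = Dm (fun z => bit (ext z (par z)) k == b) +
    (n%:R)^-1 *: (Gop N *m Dm (fun z => bit (ext z (~~ par z)) k == b) *m Gop N).
Proof.
rewrite /Sop big_mkcond big_ext2.
rewrite big_split /=; congr (_ + _).
  by rewrite /Dm [in RHS]big_mkcond; apply: eq_bigr => z _; rewrite psi_even.
rewrite /Dm [in RHS]big_mkcond mulmx_sum_both scaler_sumr.
apply: eq_bigr => z _.
case: ifP => _; first by rewrite odd_outer.
by rewrite mulmx0 mul0mx scaler0.
Qed.

End S.


Lemma pstr0 m (a b : bits m) : pstr a b 0 = 0.
Proof. by apply: mel_eq => y x; rewrite mel_pstr mel0 mulr0 mul0r. Qed.

Lemma pstr_sq m (a b : bits m) : dot b a = false -> pstr a b 1 *m pstr a b 1 = 1%:M.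
Proof. by move=> h; rewrite pstr_mul !bxorvv h expr0 !mulr1 one_p. Qed.

Lemma pstr_conj m (a b a' b' : bits m) c : dot b a = false ->
  pstr a b 1 *m pstr a' b' c *m pstr a b 1 =
  pstr a' b' (c * (-1) ^+ (dot b a' (+) dot b' a)).
Proof.
move=> h; rewrite !pstr_mul (bxorC a a') -bxorA bxorvv bxor0 (bxorC b b') -bxorA bxorvv bxor0.
rewrite dot_xorl h addbF signr_addb; congr pstr; ring.
Qed.

Lemma Dm_p N (bE : bits N) (b' : bool) :
  Dm (fun z => dot bE z == b') = 2^-1 *: (1%:M + (-1) ^+ b' *: pstr zb bE 1).
Proof.
apply: mel_eq => y x.
rewrite mel_scale mel_add mel1 mel_scale mel_pstr bxor0.
rewrite /Dm mel_sum big_mkcond (bigD1 x) //= big1 ?addr0; last first.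
  move=> z ne; case: ifP => // _.
  by rewrite mel_outer !vel_ket (eq_sym x) (negbTE ne) conjC0 mulr0.
rewrite mel_outer !vel_ket eqxx conjC1 mulr1.
case: (y == x) => /=; last by case: ifP => _; rewrite mul0r mulr0 add0r mulr0.
by case: (dot bE x); case: b' => /=; rewrite ?expr0 ?expr1; field.
Qed.

Lemma omega_gg N k l : (1 <= k <= N.+1)%N -> (1 <= l <= N.+1)%N ->
  dot (II N 1 k) (ee N l) (+) dot (II N 1 l) (ee N k) = (k != l).
Proof. move=> Hk Hl; rewrite !dot_II_ee; move: Hk Hl; bsolve. Qed.

Lemma gam_anti N l l' : (1 <= l <= N.+1)%N -> (1 <= l' <= N.+1)%N ->
  gam N l *m gam N l' + gam N l' *m gam N l =
  if l == l' then 2%:R *: 1%:M else 0.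
Proof.
move=> Hl Hl'; rewrite /gam !pstr_mul (bxorC (ee N l')) (bxorC (II N 1 l')) add_p.
case: eqP => [->|ne].
  by rewrite !bxorvv dot_II_ee ltnn !andbF expr0 !mulr1 one_p scale_p mulr1.
rewrite (_ : _ + _ = 0) ?pstr0 //.
have := omega_gg Hl Hl'; move/eqP: ne => ->.
by case: (dot _ _); case: (dot _ _) => //= _; rewrite ?expr0 ?expr1 !mul1r ?subrr ?addrN ?addNr.
Qed.

Section Rel.
Variable N k : nat.
Hypothesis Hk : (1 <= k <= N.+1)%N.
Local Notation n := N.+1.
Definition tt' := (k == N.+1).
Definition bE : bits N := if k == N.+1 then ones N else ee N k.
Definition Eop : Opr N := pstr zb bE 1.
Local Notation E := Eop.
Local Notation G := (Gop N).
Local Notation g := (gam N k).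

Lemma gam_ok l : dot (II N 1 l) (ee N l) = false.
Proof. by rewrite dot_II_ee ltnn !andbF. Qed.

Lemma omega_gam l : (1 <= l <= N.+1)%N ->
  dot (II N 1 k) (ee N l) (+) dot (II N 1 l) (ee N k) = (k != l).
Proof. exact: omega_gg. Qed.

Lemma omega_E l : (1 <= l <= N.+1)%N -> dot bE (ee N l) = tt' (+) (l == k).
Proof.
move=> Hl; rewrite /bE /tt'; case: eqP => [e|ne].
  rewrite /ones /ee dot_mk_e /=; move: Hl; rewrite e; bsolve.
by rewrite dot_ee_ee /=; move: Hk Hl ne; bsolve.
Qed.

Lemma R1 : E *m E = 1%:M.
Proof. by rewrite /Eop pstr_sq // dot0r. Qed.

Lemma R3 : g *m g = 1%:M.
Proof. by rewrite /gam pstr_sq // gam_ok. Qed.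

Lemma gam_conj l : (1 <= l <= N.+1)%N ->
  g *m gam N l *m g = (-1) ^+ (k != l) *: gam N l.
Proof.
move=> Hl; rewrite /gam pstr_conj ?gam_ok // omega_gam // scale_p; congr pstr; ring.
Qed.

Lemma E_conj l : (1 <= l <= N.+1)%N ->
  E *m gam N l *m E = (-1) ^+ (tt' (+) (l == k)) *: gam N l.
Proof.
move=> Hl; rewrite /gam /Eop pstr_conj; last exact: dot0r.
rewrite dot0r addbF omega_E // scale_p; congr pstr; ring.
Qed.

Lemma sum_sign_delta (s : bool) :
  \sum_(1 <= l < N.+2) (-1) ^+ (s (+) (l == k)) *: gam N l = (-1) ^+ s *: (G - 2%:R *: g).
Proof.
rewrite /Gop scalerBr scaler_sumr.
rewrite (eq_bigr (fun l => (-1) ^+ s *: gam N l -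
   (if l == k then 2%:R * (-1) ^+ s *: gam N l else 0))); last first.
  move=> l _; case: eqP => _; rewrite ?addbT ?addbF ?subr0 //.
  by rewrite -scalerBl; congr (_ *: _); case: s => /=; rewrite ?expr0 ?expr1; ring.
rewrite sumrB sum_nat_delta; last by move: Hk; bsolve.
by rewrite scalerA mulrC.
Qed.

Lemma R5 : E *m G *m E = (-1) ^+ tt' *: (G - 2%:R *: g).
Proof.
rewrite {1}/Gop mulmx_sum_both.
rewrite -sum_sign_delta; apply: eq_big_nat => l Hl; rewrite E_conj //.
Qed.

Lemma R6 : E *m g *m E = - (-1) ^+ tt' *: g.
Proof.
rewrite E_conj // eqxx addbT; congr (_ *: _).
by case: tt' => /=; rewrite ?expr0 ?expr1 ?opprK.
Qed.

Lemma R4 : g *m G *m g = 2%:R *: g - G.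
Proof.
rewrite {1}/Gop mulmx_sumr mulmx_suml.
rewrite (eq_big_nat _ _ (F2 := fun l => (-1) ^+ (true (+) (l == k)) *: gam N l)).
  rewrite sum_sign_delta expr1 scaleN1r opprB; done.
move=> l Hl; rewrite gam_conj; last by move: Hl; bsolve.
by rewrite eq_sym; case: (l == k).
Qed.

End Rel.


Lemma two_neq0 : (2%:R : algC) != 0.
Proof. by rewrite pnatr_eq0. Qed.

Lemma nS_neq0 N : (1 + N%:R : algC) != 0.
Proof. by rewrite nat1r pnatr_eq0. Qed.

Lemma R2 N : Gop N *m Gop N = N.+1%:R *: 1%:M.
Proof.
have HX : Gop N *m Gop N =
    \sum_(1 <= l < N.+2) \sum_(1 <= l' < N.+2) gam N l *m gam N l'.
  by rewrite {1}/Gop mulmx_suml; apply: eq_bigr => l _; rewrite mulmx_sumr.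
have H2 : Gop N *m Gop N + Gop N *m Gop N = (N.+1%:R * 2%:R) *: 1%:M.
  rewrite {1}HX HX [X in _ + X](exchange_big_nat) -big_split /=.
  rewrite (eq_big_nat _ _ (F2 := fun a => 2%:R *: 1%:M)); last first.
    move=> a Ha; rewrite -big_split /=.
    rewrite (eq_big_nat _ _ (F2 := fun b => if b == a then 2%:R *: 1%:M else 0)).
      by rewrite sum_nat_delta.
    move=> b Hb; rewrite gam_anti; first by rewrite eq_sym.
      by move: Hb; bsolve.
    by move: Ha; bsolve.
  by rewrite sumr_const_nat subSS subn0 -scaler_nat scalerA mulrC.
apply: mel_eq => y x; have := congr1 (fun A => mel A y x) H2.
rewrite mel_add !mel_scale => h.
rewrite (_ : mel _ y x = (mel (Gop N *m Gop N) y x + mel (Gop N *m Gop N) y x) / 2%:R); last first.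
  by field.
by rewrite h; field.
Qed.

Ltac melify := apply: mel_eq => ? ?; rewrite ?(mel_add, mel_opp, mel_scale, mel1).

Lemma Dm_ext N (c1 c2 : pred (bits N)) : c1 =1 c2 -> Dm c1 = Dm c2.
Proof. by move=> h; rewrite /Dm; apply: eq_bigl. Qed.

Section Alg.
Variables N k : nat.
Hypothesis Hk : (1 <= k <= N.+1)%N.
Local Notation n := N.+1.
Local Notation E := (Eop N k).
Local Notation g := (gam N k).
Local Notation G := (Gop N).
Local Notation X := (Eop N k *m gam N k *m Gop N).
Local Notation t := (tt' N k).

Lemma GEG : G *m E *m G = (-1) ^+ t *: (n%:R *: E - 2%:R *: X).
Proof.
have -> : G *m E *m G = E *m (E *m G *m E) *m G by rewrite !mulmxA (R1 N k) mul1mx.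
rewrite (R5 Hk) -scalemxAr -scalemxAl mulmxBr mulmxBl -scalemxAr -scalemxAl.
by rewrite -(mulmxA E G G) R2 -scalemxAr mulmx1.
Qed.

Lemma signsq (t0 : bool) : (-1) ^+ t0 * (-1) ^+ t0 = 1 :> algC.
Proof. by case: t0; rewrite ?expr0 ?expr1 ?mulr1 ?mulrNN ?mulr1. Qed.

Lemma Sop_R b : Sop n k b = 1%:M + (-1) ^+ b *: (E - n%:R^-1 *: X).
Proof.
rewrite Sop_eq.
have H1 : Dm (fun z => bit (ext z (par z)) k == b) = Dm (fun z => dot (bE N k) z == b).
  apply: Dm_ext => z /=; rewrite bit_ext /bE.
  by case: (eqVneq k N.+1) => [e|ne] /=; last by rewrite bit_dot.
have H2 : Dm (fun z => bit (ext z (~~ par z)) k == b) =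
          Dm (fun z => dot (bE N k) z == b (+) t).
  apply: Dm_ext => z /=; rewrite bit_ext /bE /tt'.
  case: (eqVneq k N.+1) => [e|ne] /=; last by rewrite bit_dot addbF.
  by rewrite addbT /par; case: (dot _ _); case: (b).
rewrite H1 H2 {H1 H2}.
rewrite !Dm_p -/(Eop N k) -scalemxAr -scalemxAl mulmxDr mulmxDl mulmx1 -scalemxAr -scalemxAl GEG R2.
melify.
rewrite signr_addb; case: b; case: t; rewrite /= ?expr0 ?expr1; field; exact: nS_neq0.
Qed.

Lemma EX : E *m X = g *m G.
Proof. by rewrite !mulmxA (R1 N k) mul1mx. Qed.

Lemma XE : X *m E = 2%:R *: 1%:M - g *m G.
Proof.
have -> : X *m E = (E *m g *m E) *m (E *m G *m E).
  rewrite !mulmxA; congr (_ *m _); congr (_ *m _).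
  by rewrite -mulmxA (R1 N k) mulmx1.
rewrite (R6 Hk) (R5 Hk) -scalemxAl -scalemxAr mulmxBr -scalemxAr (R3 N k).
by melify; case: t; rewrite /= ?expr0 ?expr1; ring.
Qed.

Lemma XX : X *m X = n%:R *: 1%:M.
Proof.
rewrite {2}(_ : X = E *m (g *m G)) ?mulmxA //.
rewrite XE mulmxBl -scalemxAl mul1mx.
rewrite (R4 Hk) mulmxBl mulmxBl -!scalemxAl R2.
by melify; ring.
Qed.

Lemma Rsq : (E - n%:R^-1 *: X) *m (E - n%:R^-1 *: X) = (N%:R / n%:R) *: 1%:M.
Proof.
rewrite mulmxBl !mulmxBr -!scalemxAl -!scalemxAr (R1 N k) EX XE XX.
by melify; field; exact: nS_neq0.
Qed.
End Alg.


Ltac bcase := repeat (match goal with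
  | |- context [(?x == ?y :> nat)] => case: (@eqP _ x y) => ?
  | |- context [(?x <= ?y)%N] => case: (leqP x y) => ?
  end).

Lemma bxor0l m (a : bits m) : bxor zb a = a.
Proof. by rewrite bxorC bxor0. Qed.

Ltac mask_solve := rewrite ?bxor0 ?bxor0l /ee /II /ones ?mk_xor; apply: mk_ext => ? ? /=;
  bcase; try (exfalso; lia); done.

Lemma pstr_cancel m (a b a' b' : bits m) c c' :
  a = a' -> b = b' -> c + c' = 0 -> pstr a b c + pstr a' b' c' = 0.
Proof. by move=> -> -> h; rewrite add_p h pstr0. Qed.

Lemma Hi : ('i * 'i : algC) = -1.
Proof. by rewrite -expr2 sqrCi. Qed.

Lemma iiE (x y : algC) : 'i * 1 * x * 'i * y = - (x * y).
Proof. transitivity ('i * 'i * (x * y)); first ring. by rewrite Hi mulN1r. Qed.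

Section K.
Variables N k : nat.
Hypothesis Hk : (1 <= k <= N.+1)%N.
Local Notation n := N.+1.
Local Notation E := (Eop N k).
Local Notation g := (gam N k).
Local Notation G := (Gop N).

Lemma Ecal_p : Ecal n k = E.
Proof.
rewrite /Ecal /Eop /bE; case: ltnP => h.
  by rewrite PZ_p (_ : (k == N.+1) = false) //; apply/eqP; lia.
rewrite (_ : (k == N.+1) = true); last by apply/eqP; lia.
by rewrite Zs_p; congr pstr; mask_solve.
Qed.

Section Small.
Hypothesis Hkn : (k <= N)%N.

Lemma bE_small : bE N k = ee N k.
Proof. by rewrite /bE (_ : (k == N.+1) = false) //; apply/eqP; lia. Qed.

Lemma Egg_p l : E *m g *m gam N l =
  pstr (bxor (ee N k) (ee N l)) (bxor (II N 1 k.+1) (II N 1 l))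
       (- (-1) ^+ dot (II N 1 k.+1) (ee N l)).
Proof.
rewrite /Eop bE_small /gam !pstr_mul (bxorC zb) bxor0.
rewrite (_ : bxor (ee N k) (II N 1 k) = II N 1 k.+1); last by mask_solve.
rewrite dot_ee_ee eqxx andbT (_ : (1 <= k <= N)%N = true); last by apply/andP; split; lia.
by rewrite expr1; congr pstr; ring.
Qed.

Lemma T1 l : (1 <= l < k)%N ->
  E *m g *m gam N l + PY N l *m Zs N l.+1 k *m PY N k = 0.
Proof.
move=> Hl; rewrite Egg_p !PY_p Zs_p !pstr_mul !bxor0 dot0r.
apply: pstr_cancel; try mask_solve.
rewrite (_ : bxor (ee N l) (II N l.+1 k) = II N l k); last by mask_solve.
rewrite dot_II_ee dot_II_ee iiE.
bcase; try (exfalso; lia); rewrite /= ?expr0 ?expr1; ring.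
Qed.

Lemma T3 l : (k < l <= N)%N ->
  E *m g *m gam N l + PX N k *m Zs N k.+1 l *m PX N l = 0.
Proof.
move=> Hl; rewrite Egg_p !PX_p Zs_p !pstr_mul !bxor0 dot0l.
rewrite (bxorC zb) bxor0.
apply: pstr_cancel; try mask_solve.
rewrite !dot_II_ee.
bcase; try (exfalso; lia); rewrite /= ?expr0 ?expr1; ring.
Qed.

Lemma T4 : E *m g *m gam N N.+1 + PX N k *m Zs N k.+1 N.+1 = 0.
Proof.
rewrite Egg_p !PX_p Zs_p !pstr_mul ee_N !bxor0 dot0l (bxorC zb) bxor0.
apply: pstr_cancel; try mask_solve.
by rewrite dot0r expr0; ring.
Qed.

Lemma EgG_small : E *m g *m G = E - Kcal n k.
Proof.
rewrite /Kcal (_ : (k < N.+1)%N = true); last by lia.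
rewrite /Gop mulmx_sumr (big_cat_nat (n:=k)) /=; [|lia|lia].
rewrite (big_ltn (m:=k)); last by lia.
rewrite big_nat_recr /=; last by lia.
rewrite (eq_big_nat _ _ (F2 := fun l => - (PY N l *m Zs N l.+1 k *m PY N k))); last first.
  by move=> l Hl; apply/eqP; rewrite -addr_eq0 T1.
rewrite [X in _ + (_ + (X + _))](eq_big_nat _ _
   (F2 := fun l => - (PX N k *m Zs N k.+1 l *m PX N l))); last first.
  by move=> l Hl; apply/eqP; rewrite -addr_eq0 T3 //; lia.
have -> : E *m g *m gam N N.+1 = - (PX N k *m Zs N k.+1 N.+1).
  by apply/eqP; rewrite -addr_eq0 T4.
rewrite -mulmxA (R3 N k) mulmx1 !sumrN.
by melify; ring.
Qed.
End Small.

Lemma ZX_gam l : Zs N 1 l *m PX N l = gam N l.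
Proof.
rewrite Zs_p PX_p pstr_mul bxorC !bxor0 dot_II_ee ltnn !andbF expr0 !mulr1.
by [].
Qed.

Lemma EgG_K : E *m g *m G = E - Kcal n k.
Proof.
case: (leqP k N) => h; first exact: EgG_small.
have ek : k = N.+1 by lia.
have gE : g = E.
  rewrite /gam /Eop /bE ek eqxx ee_N; congr pstr; mask_solve.
rewrite /Kcal (_ : (k < N.+1)%N = false); last by lia.
rewrite gE (R1 N k) mul1mx /Gop big_nat_recr //= -gE ek.
have HK : \sum_(1 <= l < N.+1) (Zs N 1 l *m PX N l) = \sum_(1 <= l < N.+1) gam N l.
  by apply: eq_big_nat => l _; exact: ZX_gam.
rewrite HK.
by melify; ring.
Qed.
End K.


Lemma conj_sum (I : Type) (r : seq I) (P : pred I) (F : I -> algC) :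
  (\sum_(i <- r | P i) F i)^* = \sum_(i <- r | P i) (F i)^*.
Proof. exact: rmorph_sum. Qed.
Lemma conjD (a b : algC) : (a + b)^* = a^* + b^*.
Proof. exact: rmorphD. Qed.

Section Adj.
Variable m : nat.
Implicit Types A B : Opr m.

Lemma mel_adjO A y x : mel (adjO A) y x = (mel A x y)^*.
Proof. by rewrite /mel /adjO !mxE. Qed.

Lemma adjO_mul A B : adjO (A *m B) = adjO B *m adjO A.
Proof.
apply: mel_eq => y x; rewrite mel_adjO !mel_mul conj_sum; apply: eq_bigr => w _.
by rewrite conjM !mel_adjO mulrC.
Qed.

Lemma col_ext A B : (forall j, A *m (delta_mx j 0 : Vec m) = B *m (delta_mx j 0 : Vec m)) -> A = B.
Proof.
move=> H; apply/matrixP => i j; have := congr1 (fun C : Vec m => C i 0) (H j).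
by rewrite -!colE !mxE.
Qed.

Lemma proj_unique S lam (M P : Opr m) :
  is_orth_proj_eig S lam M -> is_orth_proj_eig S lam P -> M = P.
Proof.
case=> aM MM HM [aP PP HP].
have PM : P *m M = M.
  apply: col_ext => j; rewrite -!mulmxA; apply/(HP _).2/(HM _).1.
  by rewrite mulmxA MM.
have MP : M *m P = P.
  apply: col_ext => j; rewrite -!mulmxA; apply/(HM _).2/(HP _).1.
  by rewrite mulmxA PP.
by rewrite -aM -PM adjO_mul aM aP MP.
Qed.

Lemma vel_add (u v : Vec m) y : vel (u + v) y = vel u y + vel v y.
Proof. by rewrite /vel mxE. Qed.

Lemma half_conj : (2^-1 : algC)^* = 2^-1.
Proof. by rewrite geC0_conj // invr_ge0 ler0n. Qed.

Lemma proj_ok (O : Opr m) (b : bool) (r : algC) :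
  r != 0 -> O *m O = 1%:M -> adjO O = O ->
  is_orth_proj_eig (1%:M + ((-1) ^+ b * r) *: O) (1 + r)
                   (2^-1 *: (1%:M + (-1) ^+ b *: O)).
Proof.
move=> r0 OO aO; split.
- apply: mel_eq => y x; rewrite mel_adjO !(mel_scale, mel_add, mel1) conjM half_conj.
  rewrite conjD conjC_nat (eq_sym x) conjM -mel_adjO aO; congr (_ * (_ + _ * _)).
  by case: b; rewrite /= ?expr0 ?expr1 ?conjC1 ?conjCN1.
- rewrite -!scalemxAl -!scalemxAr !(mulmxDl, mulmxDr) !mul1mx !mulmx1.
  rewrite -!scalemxAl -!scalemxAr OO.
  by melify; case: b; rewrite /= ?expr0 ?expr1; field.
- move=> v; rewrite -scalemxAl !mulmxDl !mul1mx -!scalemxAl; split => H.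
  + apply: vel_eq => y; have := congr1 (fun u => vel u y) H.
    rewrite !(vel_add, vel_scale) => h.
    have hw : (-1) ^+ b * vel (O *m v) y = vel v y.
      transitivity (2%:R * (2^-1 * (vel v y + (-1) ^+ b * vel (O *m v) y)) - vel v y).
        by field.
      by rewrite h; ring.
    by rewrite -hw; ring.
  + apply: vel_eq => y; have := congr1 (fun u => vel u y) H.
    rewrite !(vel_add, vel_scale) => h.
    have hw : (-1) ^+ b * vel (O *m v) y = vel v y.
      apply: (mulfI r0); rewrite (_ : r * vel v y = (1 + r) * vel v y - vel v y); last by ring.
      by rewrite -h; ring.
    by rewrite hw; field.
Qed.
End Adj.


Lemma adjO_Sop n k b : adjO (Sop n k b) = Sop n k b.
Proof.
apply: mel_eq => y x; rewrite mel_adjO /Sop !mel_sum conj_sum; apply: eq_bigr => x' _.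
by rewrite !mel_outer conjM conjCK mulrC.
Qed.

Unset Implicit Arguments.
Set Strict Implicit.

Theorem mainTheorem3 (n : nat) (M : bool -> nat -> Opr n.-1) :
  (2 <= n)%N ->
  (forall (b : bool) (k : nat), (1 <= k <= n)%N ->
     is_orth_proj_eig (Sop n k b) (1 + sqrtC (mu n)) (M b k)) ->
  forall k : nat, (1 <= k <= n)%N ->
    M false k - M true k =
      sqrtC (mu n) *: Ecal n k + (sqrtC (n%:R * (n.-1)%:R))^-1 *: Kcal n k.
Proof.
case: n M => [|N] M // n2 HM k Hk.
have N1 : (1 <= N)%N by [].
set r := sqrtC (mu N.+1).
set q := (sqrtC _)^-1.
set O := (X in _ = X).
have NS0 : (N.+1%:R : algC) != 0 by rewrite pnatr_eq0.
have N0 : (N%:R : algC) != 0 by rewrite pnatr_eq0 -lt0n.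
have mu0 : 0 <= mu N.+1 by rewrite /mu divr_ge0 ?ler0n.
have hr : r * r = N%:R / N.+1%:R by rewrite -expr2 sqrtCK.
have r0 : r != 0 by rewrite sqrtC_eq0 /mu mulf_neq0 ?invr_eq0.
have hrq : r * q = N.+1%:R^-1.
  apply/eqP; rewrite -(@eqrXn2 _ 2) //; last first.
  - by rewrite invr_ge0 ler0n.
  - by rewrite mulr_ge0 ?sqrtC_ge0 // invr_ge0 sqrtC_ge0 mulr_ge0 ?ler0n.
  rewrite exprMn sqrtCK exprVn sqrtCK /mu /=; apply/eqP; field.
  by rewrite nS_neq0 N0.
have RmO : Eop N k - N.+1%:R^-1 *: (Eop N k *m gam N k *m Gop N) = r *: O.
  rewrite (EgG_K Hk) -(Ecal_p Hk) /O; melify.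
  set e := mel _ _ _; set kk := mel _ _ _.
  transitivity ((r * r) * e + (r * q) * kk); last by ring.
  by rewrite hr hrq; field; exact: nS_neq0.
clearbody O.
have HS b : Sop N.+1 k b = 1%:M + ((-1) ^+ b * r) *: O.
  by rewrite (Sop_R Hk b) RmO scalerA.
have OO : O *m O = 1%:M.
  have := Rsq Hk; rewrite RmO -scalemxAl -scalemxAr scalerA hr => h.
  apply: mel_eq => y x; have := congr1 (fun A => mel A y x) h.
  rewrite !mel_scale => h'; apply: (mulfI (x := N%:R / N.+1%:R)).
    by rewrite mulf_neq0 ?invr_eq0.
  by rewrite h'.
have aO : adjO O = O.
  have := adjO_Sop N.+1 k false; rewrite HS => h.
  apply: mel_eq => y x; have := congr1 (fun A => mel A y x) h.
  rewrite mel_adjO !(mel_add, mel_scale, mel1) expr0 mul1r conjD conjM conjC_nat eq_sym.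
  rewrite geC0_conj ?sqrtC_ge0 // => /addrI h'.
  by rewrite mel_adjO; apply: (mulfI r0).
have HP b : M b k = 2^-1 *: (1%:M + (-1) ^+ b *: O).
  apply: (proj_unique (HM b k Hk)); rewrite HS; exact: proj_ok.
rewrite !HP /=; melify; rewrite expr0 expr1; field; done.
Qed.
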